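(* Let $m=2k+1$ with $k$ a nonnegative integer. For $h\in(0,+\infty)$ let $u=u(h)$, $J_{i,j}=J_{i,j}(h)$ and $I_{i,j}=I_{i,j}(h)$ be as in the context. Then: (i) For all integers $i,l,s\ge 0$: $J_{i,2s}=-I_{i,2s}$, $J_{2l,2s+1}=I_{2l,2s+1}$, $J_{2l+1,2s+1}=-I_{2l+1,2s+1}$. (ii) For every integer $l\ge 1$ there are constants $\tau^{i}_{l,d}$, $\mu^{i}_{l,d}$ such that for $0\le d\le l$ $$J_{2l-2d,2d}=\tau_{l,d}^{0}h^{l}J_{0,0}+\sum_{i=1}^{d}\tau_{l,d}^{i}h^{i-1}u^{2l+2d(m-1)+1-2m(i-1)}+\sum_{i=1}^{l-d}\tau_{l,d}^{i+d}h^{l-i}u^{2m+1+2(i-1)},$$ and for $0\le d\le l-1$ $$J_{2l-2d-1,2d+1}=\mu_{l,d}^{0}h^{l-1}J_{1,1}+\sum_{i=1}^{d}\mu_{l,d}^{i}h^{i-1}u^{2l+2d(m-1)+m-2m(i-1)}+\sum_{i=2}^{l-d}\mu_{l,d}^{i+d}h^{l-i}u^{3m+2+2(i-2)}.$$ (iii) For every integer $l\ge 0$ there are constants $\chi_{l,d}$ such that for $0\le d\le l$: $J_{2l+1-2d,2d}=0$ and $J_{2l-2d,2d+1}=\chi_{l,d}h^{l}J_{0,1}$.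
   Context: For $h>0$ let $u=u(h)>0$ be the unique positive number with $u^2+u^{2m}=h$; the circle $x^2+y^2=h$ meets the curve $y=x^m$ at $A=(-u,(-u)^m)$ and $B=(u,u^m)$. $L_h^{+}$ is the arc of this circle in $\{y\ge x^m\}$ traversed clockwise from $A$ to $B$, and $L_h^-$ the arc in $\{y\le x^m\}$ traversed clockwise from $B$ to $A$. For nonnegative integers $i,j$, $J_{i,j}(h)=\int_{L_h^+}x^iy^jdx$ and $I_{i,j}(h)=\int_{L_h^-}x^iy^jdx$. The constants $\tau,\mu,\chi$ depend only on the indices (and $m$), not on $h$. *)

(* Defs.v *)
From Stdlib Require Import Reals List.
From Coquelicot Require Import Coquelicot.
Open Scope R_scope.

(* Finite sum  sum_{i=a}^{b} f i  (empty, i.e. 0, when b < a). *)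
Definition sumR (f : nat -> R) (a b : nat) : R :=
  fold_right Rplus 0 (map f (seq a (S b - a))).

Definition line_int_dx (P : R -> R -> R) (gx gy : R -> R) (a b : R) : R :=
  RInt (fun t => P (gx t) (gy t) * Derive gx t) a b.

Definition circ_x (h t : R) : R := sqrt h * cos t.
Definition circ_y (h t : R) : R := sqrt h * sin t.

(* Polar angles of B = (u, u^m) and A = (-u, (-u)^m) (u > 0). *)
Definition angB (m : nat) (u : R) : R := atan (u ^ m / u).
Definition angA (m : nat) (u : R) : R := PI + atan ((- u) ^ m / (- u)).

(* L_h^+ : arc from A clockwise (decreasing angle) to B, through the top
   point (0, sqrt h), i.e. the arc lying in {y >= x^m}.
   L_h^- : arc from B clockwise to A, through (0, -sqrt h), i.e. the arc
   lying in {y <= x^m}. *)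
Definition Jij (m : nat) (h u : R) (i j : nat) : R :=
  line_int_dx (fun x y => x ^ i * y ^ j) (circ_x h) (circ_y h)
    (angA m u) (angB m u).

Definition Iij (m : nat) (h u : R) (i j : nat) : R :=
  line_int_dx (fun x y => x ^ i * y ^ j) (circ_x h) (circ_y h)
    (angB m u) (angA m u - 2 * PI).

(* Main.v *)
Require Import Defs.
From Stdlib Require Import Reals List Lia Lra IndefiniteDescription.
From Coquelicot Require Import Coquelicot.
Open Scope R_scope.


Definition F (a b : nat) (t : R) : R := cos t ^ a * sin t ^ b.

Lemma F_cont a b t : continuous (F a b) t.
Proof. apply (ex_derive_continuous (K:=R_AbsRing) (V:=R_NormedModule)). unfold F. auto_derive. auto. Qed.

Lemma ex_RInt_F a b x y : ex_RInt (F a b) x y.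
Proof. apply (ex_RInt_continuous (V:=R_CompleteNormedModule)). intros; apply F_cont. Qed.

Lemma RInt_scalR (f : R -> R) k x y : ex_RInt f x y ->
  RInt (fun t => k * f t) x y = k * RInt f x y.
Proof. intros H. apply (RInt_scal (V:=R_CompleteNormedModule) f x y k H). Qed.

Lemma RInt_plusR (f g : R -> R) x y : ex_RInt f x y -> ex_RInt g x y ->
  RInt (fun t => f t + g t) x y = RInt f x y + RInt g x y.
Proof. intros H1 H2. apply (RInt_plus (V:=R_CompleteNormedModule) f g x y H1 H2). Qed.

Lemma Derive_circ_x h t : Derive (circ_x h) t = - sqrt h * sin t.
Proof. unfold circ_x. apply is_derive_unique. auto_derive; auto. ring. Qed.

Lemma Jform m h u p q : Jij m h u p q =
  - sqrt h ^ (p + q + 1) * RInt (F p (q + 1)) (angA m u) (angB m u).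
Proof.
  unfold Jij, line_int_dx.
  rewrite (RInt_ext _ (fun t => (- sqrt h ^ (p + q + 1)) * (F p (q + 1) t))).
  - rewrite RInt_scalR; [reflexivity | apply ex_RInt_F].
  - intros t _. rewrite Derive_circ_x. unfold circ_x, circ_y, F. rewrite !Rpow_mult_distr, !pow_add. simpl. ring.
Qed.

Lemma Iform m h u p q : Iij m h u p q =
  - sqrt h ^ (p + q + 1) * RInt (F p (q + 1)) (angB m u) (angA m u - 2 * PI).
Proof.
  unfold Iij, line_int_dx.
  rewrite (RInt_ext _ (fun t => (- sqrt h ^ (p + q + 1)) * (F p (q + 1) t))).
  - rewrite RInt_scalR; [reflexivity | apply ex_RInt_F].
  - intros t _. rewrite Derive_circ_x. unfold circ_x, circ_y, F. rewrite !Rpow_mult_distr, !pow_add. simpl. ring.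
Qed.

Lemma angA_eq k u : 0 < u -> angA (2 * k + 1) u = PI + angB (2 * k + 1) u.
Proof.
  intros Hu. unfold angA, angB. f_equal. f_equal.
  replace (- u) with (-1 * u) by ring. rewrite Rpow_mult_distr.
  replace (2 * k + 1)%nat with (S (2 * k)) by lia. rewrite pow_1_odd. field. lra.
Qed.

Lemma geomB m h u : (1 <= m)%nat -> 0 < u -> u ^ 2 + u ^ (2 * m) = h ->
  sqrt h * cos (angB m u) = u /\ sqrt h * sin (angB m u) = u ^ m.
Proof.
  intros Hm Hu Hh. unfold angB. rewrite cos_atan, sin_atan.
  set (z := u ^ m / u).
  assert (Hz : h = u ^ 2 * (1 + z²)).
  { subst h z. unfold Rsqr. rewrite Nat.mul_comm, pow_mult. field. lra. }
  assert (Hp : 0 < 1 + z²) by (pose proof (Rle_0_sqr z); lra).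
  assert (Hs : sqrt h = u * sqrt (1 + z²)).
  { rewrite Hz, sqrt_mult, sqrt_pow2; try lra. apply pow_le; lra. }
  pose proof (sqrt_lt_R0 _ Hp).
  rewrite Hs. split; [field; lra|]. subst z. field. split; lra.
Qed.

Lemma shift_RInt a b x y v :
  RInt (F a b) (x + v) (y + v) = RInt (fun t => F a b (t + v)) x y.
Proof.
  pose proof (RInt_comp_lin (V:=R_CompleteNormedModule) (F a b) 1 v x y) as H.
  rewrite !Rmult_1_l in H. rewrite <- H.
  - apply RInt_ext. intros t _. rewrite Rmult_1_l. unfold scal; simpl; unfold mult; simpl. rewrite Rmult_1_l; reflexivity.
  - apply ex_RInt_F.
Qed.

Lemma F_shift a b t v : cos v = -1 -> sin v = 0 -> F a b (t + v) = (-1) ^ (a + b) * F a b t.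
Proof.
  intros Hc Hs. unfold F. rewrite cos_plus, sin_plus, Hc, Hs.
  replace (cos t * -1 - sin t * 0) with (-1 * cos t) by ring.
  replace (sin t * -1 + cos t * 0) with (-1 * sin t) by ring.
  rewrite !Rpow_mult_distr, pow_add. ring.
Qed.

Lemma RInt_F_shift a b x y v : cos v = -1 -> sin v = 0 ->
  RInt (F a b) (x + v) (y + v) = (-1) ^ (a + b) * RInt (F a b) x y.
Proof.
  intros Hc Hs. rewrite shift_RInt.
  rewrite (RInt_ext _ (fun t => ((-1) ^ (a + b)) * (F a b t))).
  - rewrite RInt_scalR; [reflexivity | apply ex_RInt_F].
  - intros t _. apply F_shift; auto.
Qed.

Lemma cosmPI : cos (- PI) = -1. Proof. rewrite cos_neg; apply cos_PI. Qed.
Lemma sinmPI : sin (- PI) = 0. Proof. rewrite sin_neg, sin_PI; ring. Qed.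

Lemma split_F a b x y :
  RInt (F a b) x y = RInt (F (S (S a)) b) x y + RInt (F a (S (S b))) x y.
Proof.
  transitivity (RInt (fun t => (F (S (S a)) b t) + (F a (S (S b)) t)) x y).
  - apply RInt_ext. intros t _. unfold F; simpl.
    pose proof (sin2_cos2 t) as E. unfold Rsqr in E.
    replace (cos t ^ a * sin t ^ b) with (cos t ^ a * sin t ^ b * (sin t * sin t + cos t * cos t))
      by (rewrite E; ring). ring.
  - rewrite RInt_plusR; try apply ex_RInt_F. reflexivity.
Qed.

Lemma LA a x y : RInt (F a 1) x y = (cos x ^ S a - cos y ^ S a) / INR (S a).
Proof.
  assert (HN : INR (S a) <> 0) by (apply not_0_INR; lia).
  apply is_RInt_unique.
  set (G := fun t => (- / INR (S a)) * cos t ^ S a).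
  replace ((cos x ^ S a - cos y ^ S a) / INR (S a)) with (minus (G y) (G x)).
  - apply (is_RInt_derive (V:=R_CompleteNormedModule)).
    + intros t _. unfold G.
      replace (F a 1 t) with ((- / INR (S a)) * (INR (S a) * (- sin t) * cos t ^ Init.Nat.pred (S a))).
      * apply is_derive_scal. apply is_derive_pow. apply is_derive_cos.
      * unfold F. simpl. field. auto.
    + intros; apply F_cont.
  - unfold minus, plus, opp, G; simpl. field. auto.
Qed.

Lemma LB b x y : RInt (F 1 b) x y = (sin y ^ S b - sin x ^ S b) / INR (S b).
Proof.
  assert (HN : INR (S b) <> 0) by (apply not_0_INR; lia).
  apply is_RInt_unique.
  set (G := fun t => (/ INR (S b)) * sin t ^ S b).
  replace ((sin y ^ S b - sin x ^ S b) / INR (S b)) with (minus (G y) (G x)).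
  - apply (is_RInt_derive (V:=R_CompleteNormedModule)).
    + intros t _. unfold G.
      replace (F 1 b t) with ((/ INR (S b)) * (INR (S b) * (cos t) * sin t ^ Init.Nat.pred (S b))).
      * apply is_derive_scal. apply is_derive_pow. apply is_derive_sin.
      * unfold F. simpl. field. auto.
    + intros; apply F_cont.
  - unfold minus, plus, opp, G; simpl. field. auto.
Qed.

Lemma L02 : RInt (F 0 2) PI 0 = - PI / 2.
Proof.
  apply is_RInt_unique.
  set (G := fun t => t / 2 - sin t * cos t / 2).
  replace (- PI / 2) with (minus (G 0) (G PI)).
  - apply (is_RInt_derive (V:=R_CompleteNormedModule)).
    + intros t _. unfold G. auto_derive; auto.
      unfold F. pose proof (sin2_cos2 t) as E. unfold Rsqr in E. simpl. lra.
    + intros; apply F_cont.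
  - unfold minus, plus, opp, G; simpl. rewrite sin_0, cos_0, sin_PI, cos_PI. field.
Qed.


Ltac toR := lazymatch goal with |- ?a = ?b => change (@eq R a b) end.

Lemma neg1_even n : (-1) ^ (2 * n) = 1. Proof. apply pow_1_even. Qed.
Lemma neg1_odd n : (-1) ^ (2 * n + 1) = -1.
Proof. rewrite Nat.add_1_r. apply pow_1_odd. Qed.

Lemma sinPIx x : sin (PI + x) = - sin x. Proof. rewrite Rplus_comm. apply neg_sin. Qed.
Lemma cosPIx x : cos (PI + x) = - cos x. Proof. rewrite Rplus_comm. apply neg_cos. Qed.

Lemma Lodd a b x : RInt (F (2 * a + 1) (2 * b + 1)) (PI + x) x = 0.
Proof.
  revert b. induction a as [|a IH]; intros b.
  - change (2 * 0 + 1)%nat with 1%nat. rewrite LB, sinPIx.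
    replace (- sin x) with (-1 * sin x) by ring. rewrite Rpow_mult_distr.
    replace (S (2 * b + 1)) with (2 * (S b))%nat by lia. rewrite neg1_even. lazymatch goal with |- ?a = ?b => change (@eq R a b) end. field.
    apply not_0_INR; lia.
  - pose proof (split_F (2 * a + 1) (2 * b + 1) (PI + x) x) as E.
    replace (S (S (2 * a + 1))) with (2 * S a + 1)%nat in E by lia.
    replace (S (S (2 * b + 1))) with (2 * S b + 1)%nat in E by lia.
    rewrite IH, IH in E. lra.
Qed.

Lemma RInt_ChaslesR (f : R -> R) a b c : ex_RInt f a b -> ex_RInt f b c ->
  RInt f a b + RInt f b c = RInt f a c.
Proof. intros H1 H2. apply (RInt_Chasles (V:=R_CompleteNormedModule) f a b c H1 H2). Qed.

Lemma RInt_swapR (f : R -> R) a b : ex_RInt f a b -> RInt f b a = - RInt f a b.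
Proof. intros H. rewrite <- (opp_RInt_swap (V:=R_CompleteNormedModule) f a b H). reflexivity. Qed.

Lemma period a b x : (-1) ^ (a + b) = 1 ->
  RInt (F a b) (PI + x) x = RInt (F a b) PI 0.
Proof.
  intros He.
  rewrite <- (RInt_ChaslesR _ (PI + x) PI x) by apply ex_RInt_F.
  rewrite <- (RInt_ChaslesR _ PI 0 x) by apply ex_RInt_F.
  replace (PI + x) with (x + PI) by ring.
  replace (RInt (F a b) (x + PI) PI) with (RInt (F a b) (x + PI) (0 + PI)) by (rewrite Rplus_0_l; reflexivity).
  rewrite RInt_F_shift, He; [|apply cos_PI|apply sin_PI].
  rewrite (RInt_swapR _ 0 x) by apply ex_RInt_F. toR. ring.
Qed.

Definition Rel (m : nat) (h u : R) := 0 < h /\ 0 < u /\ u ^ 2 + u ^ (2 * m) = h.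

Lemma Jform' k h u p q : 0 < u ->
  Jij (2 * k + 1) h u p q =
  - sqrt h ^ (p + q + 1) * RInt (F p (q + 1)) (PI + angB (2 * k + 1) u) (angB (2 * k + 1) u).
Proof. intros Hu. rewrite Jform, angA_eq; auto. Qed.

Lemma Irel k h u p q : 0 < u ->
  Iij (2 * k + 1) h u p q = (-1) ^ (p + q + 1) * Jij (2 * k + 1) h u p q.
Proof.
  intros Hu. rewrite Iform, Jform', angA_eq by auto.
  set (b := angB (2 * k + 1) u).
  replace (PI + b - 2 * PI) with (b + - PI) by ring.
  replace b with ((PI + b) + - PI) at 1 by ring.
  rewrite RInt_F_shift; [|apply cosmPI|apply sinmPI].
  replace (p + (q + 1))%nat with (p + q + 1)%nat by lia. ring.
Qed.

Lemma Jodd k h u a b : 0 < u -> Jij (2 * k + 1) h u (2 * a + 1) (2 * b) = 0.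
Proof.
  intros Hu. rewrite Jform' by auto.
  replace (2 * b + 1)%nat with (2 * b + 1)%nat by lia. rewrite Lodd. ring.
Qed.

Lemma part_i k : forall (h u : R), 0 < h -> 0 < u -> u ^ 2 + u ^ (2 * (2 * k + 1)) = h ->
     forall i l s : nat,
       Jij (2 * k + 1) h u i (2 * s) = - Iij (2 * k + 1) h u i (2 * s) /\
       Jij (2 * k + 1) h u (2 * l) (2 * s + 1) = Iij (2 * k + 1) h u (2 * l) (2 * s + 1) /\
       Jij (2 * k + 1) h u (2 * l + 1) (2 * s + 1) = - Iij (2 * k + 1) h u (2 * l + 1) (2 * s + 1).
Proof.
  intros h u Hh Hu Hr i l s. rewrite !Irel by auto.
  split; [|split].
  - destruct (Nat.Even_or_Odd i) as [[a Ha]|[a Ha]]; subst i.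
    + replace (2 * a + 2 * s + 1)%nat with (2 * (a + s) + 1)%nat by lia.
      rewrite neg1_odd. ring.
    + rewrite Jodd by auto. ring.
  - replace (2 * l + (2 * s + 1) + 1)%nat with (2 * (l + s + 1))%nat by lia.
    rewrite neg1_even. ring.
  - replace (2 * l + 1 + (2 * s + 1) + 1)%nat with (2 * (l + s + 1) + 1)%nat by lia.
    rewrite neg1_odd. ring.
Qed.

Lemma part_iii k : forall l : nat,
     exists chi : nat -> R,
       forall (h u : R), 0 < h -> 0 < u -> u ^ 2 + u ^ (2 * (2 * k + 1)) = h ->
         forall d : nat, (d <= l)%nat ->
           Jij (2 * k + 1) h u (2 * l + 1 - 2 * d) (2 * d) = 0 /\
           Jij (2 * k + 1) h u (2 * l - 2 * d) (2 * d + 1) = chi d * h ^ l * Jij (2 * k + 1) h u 0 1.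
Proof.
  intros l.
  exists (fun d => RInt (F (2 * l - 2 * d) (2 * d + 1 + 1)) PI 0 / RInt (F 0 2) PI 0).
  intros h u Hh Hu Hr d Hd. split.
  - replace (2 * l + 1 - 2 * d)%nat with (2 * (l - d) + 1)%nat by lia. apply Jodd; auto.
  - rewrite !Jform' by auto. rewrite !period.
    + rewrite L02. simpl (0 + 1 + 1)%nat.
      replace (2 * l - 2 * d + (2 * d + 1) + 1)%nat with (2 * (l + 1))%nat by lia.
      rewrite pow_mult, pow2_sqrt by lra. rewrite pow_add. simpl.
      rewrite ?L02. toR. field. pose proof PI_RGT_0. lra.
    + simpl. ring.
    + replace (2 * l - 2 * d + (2 * d + 1 + 1))%nat with (2 * (l + 1))%nat by lia.
      apply neg1_even.
Qed.


Lemma fold_plus_acc (l : list R) x : fold_right Rplus x l = fold_right Rplus 0 l + x.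
Proof. induction l; simpl; [ring | rewrite IHl; ring]. Qed.

Lemma seq_ext (f g : nat -> R) n a :
  (forall i, (a <= i < a + n)%nat -> f i = g i) ->
  fold_right Rplus 0 (map f (seq a n)) = fold_right Rplus 0 (map g (seq a n)).
Proof.
  revert a; induction n; intros a H; simpl; auto.
  rewrite H by lia. rewrite IHn; auto. intros; apply H; lia.
Qed.

Lemma sumR_ext f g a b : (forall i, (a <= i <= b)%nat -> f i = g i) -> sumR f a b = sumR g a b.
Proof. intros H. unfold sumR. apply seq_ext. intros; apply H; lia. Qed.

Lemma sumR_zero f a b : (forall i, (a <= i <= b)%nat -> f i = 0) -> sumR f a b = 0.
Proof.
  intros H. rewrite (sumR_ext f (fun _ => 0)) by auto. unfold sumR.
  induction (seq a (S b - a)); simpl; auto. rewrite IHl; ring.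
Qed.

Lemma fold_zero (l : list nat) : fold_right Rplus 0 (map (fun _ => 0) l) = 0.
Proof. induction l; simpl; [ring| rewrite IHl; ring]. Qed.

Lemma seq_single (f : nat -> R) n a j : (a <= j < a + n)%nat ->
  (forall i, (a <= i < a + n)%nat -> i <> j -> f i = 0) ->
  fold_right Rplus 0 (map f (seq a n)) = f j.
Proof.
  revert a; induction n; intros a Hj H; [lia|]. simpl.
  destruct (Nat.eq_dec a j).
  - subst. rewrite (seq_ext f (fun _ => 0)).
    + rewrite fold_zero. ring.
    + intros; apply H; lia.
  - rewrite H by lia. rewrite IHn; [ring | lia |]. intros; apply H; lia.
Qed.

Lemma sumR_single f a b j : (a <= j <= b)%nat ->
  (forall i, (a <= i <= b)%nat -> i <> j -> f i = 0) -> sumR f a b = f j.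
Proof. intros Hj H. unfold sumR. apply seq_single; [lia|]. intros; apply H; lia. Qed.

Lemma sumR_last f b : sumR f 0 (S b) = sumR f 0 b + f (S b).
Proof.
  unfold sumR. rewrite !Nat.sub_0_r. rewrite (seq_S (S b)), map_app, fold_right_app.
  simpl. rewrite fold_plus_acc. ring.
Qed.

Lemma sumR_0 f : sumR f 0 0 = f 0%nat.
Proof. unfold sumR. simpl. ring. Qed.

Lemma sumR_plus f g a b : sumR (fun i => f i + g i) a b = sumR f a b + sumR g a b.
Proof. unfold sumR. induction (seq a (S b - a)); simpl; [ring| rewrite IHl; ring]. Qed.

Lemma sumR_scal k f a b : sumR (fun i => k * f i) a b = k * sumR f a b.
Proof. unfold sumR. induction (seq a (S b - a)); simpl; [ring| rewrite IHl; ring]. Qed.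

Lemma sumR_lin3 (g1 g2 A B : nat -> R) a b :
  sumR (fun i => (g1 i + g2 i) * A i * B i) a b =
  sumR (fun i => g1 i * A i * B i) a b + sumR (fun i => g2 i * A i * B i) a b.
Proof. rewrite <- sumR_plus. apply sumR_ext. intros; ring. Qed.

Lemma sumR_scal3 k (g A B : nat -> R) a b :
  sumR (fun i => (k * g i) * A i * B i) a b = k * sumR (fun i => g i * A i * B i) a b.
Proof. rewrite <- sumR_scal. apply sumR_ext. intros; ring. Qed.

Lemma sumR_lin2 (g1 g2 A : nat -> R) a b :
  sumR (fun i => (g1 i + g2 i) * A i) a b =
  sumR (fun i => g1 i * A i) a b + sumR (fun i => g2 i * A i) a b.
Proof. rewrite <- sumR_plus. apply sumR_ext. intros; ring. Qed.

Lemma sumR_scal2 k (g A : nat -> R) a b :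
  sumR (fun i => (k * g i) * A i) a b = k * sumR (fun i => g i * A i) a b.
Proof. rewrite <- sumR_scal. apply sumR_ext. intros; ring. Qed.

Definition Subsp (m : nat) (P : (R -> R -> R) -> Prop) :=
  P (fun _ _ => 0) /\
  (forall f g, P f -> P g -> P (fun h u => f h u + g h u)) /\
  (forall k f, P f -> P (fun h u => k * f h u)) /\
  (forall f g, P f -> (forall h u, Rel m h u -> f h u = g h u) -> P g).

Lemma Subsp_sub m P f g : Subsp m P -> P f -> P g -> P (fun h u => f h u - g h u).
Proof.
  intros (H0 & Ha & Hs & He) Hf Hg.
  apply (He (fun h u => f h u + (-1) * g h u)); [apply Ha; auto|].
  intros; ring.
Qed.

Lemma Subsp_sum m P (g : nat -> R -> R -> R) c n : Subsp m P ->
  (forall a, (a <= n)%nat -> P (g a)) ->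
  P (fun h u => sumR (fun a => c a * g a h u) 0 n).
Proof.
  intros HS Hg. pose proof HS as (H0 & Ha & Hs & He).
  induction n.
  - apply (He (fun h u => c 0%nat * g 0%nat h u)); [apply Hs, Hg; lia|].
    intros; rewrite sumR_0; reflexivity.
  - apply (He (fun h u => sumR (fun a => c a * g a h u) 0 n + c (S n) * g (S n) h u)).
    + apply Ha; [apply IHn; intros; apply Hg; lia| apply Hs, Hg; lia].
    + intros; rewrite sumR_last; reflexivity.
Qed.


Lemma split_R a b x y :
  @eq R (RInt (F a b) x y) (RInt (F (S (S a)) b) x y + RInt (F a (S (S b))) x y).
Proof. exact (split_F a b x y). Qed.

Lemma Jform_o m h u p q : Nat.Odd m -> 0 < u ->
  Jij m h u p q =
  - sqrt h ^ (p + q + 1) * RInt (F p (q + 1)) (PI + angB m u) (angB m u).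
Proof. intros [k ->] Hu. apply Jform'; auto. Qed.

Lemma geom m h u : Nat.Odd m -> Rel m h u ->
  sqrt h * cos (angB m u) = u /\ sqrt h * sin (angB m u) = u ^ m.
Proof. intros [k ->] (H1 & H2 & H3). apply geomB; auto; lia. Qed.

Lemma J00 m h u : Nat.Odd m -> Rel m h u -> Jij m h u 0 0 = 2 * u.
Proof.
  intros Hm HR. pose proof (geom m h u Hm HR) as [G1 _].
  destruct HR as (H1 & H2 & H3).
  rewrite Jform_o by auto. change (0 + 0 + 1)%nat with 1%nat. change (0 + 1)%nat with 1%nat.
  rewrite (LA 0), cosPIx. set (b := angB m u) in *. rewrite <- G1. simpl. field.
Qed.

Definition ST m l d (f : R -> R -> R) := exists c : nat -> R, forall h u, Rel m h u -> f h u =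
  c 0%nat * h ^ l * Jij m h u 0 0
  + sumR (fun i => c i * h ^ (i - 1) * u ^ (2 * l + 2 * d * (m - 1) + 1 - 2 * m * (i - 1))) 1 d
  + sumR (fun i => c (i + d)%nat * h ^ (l - i) * u ^ (2 * m + 1 + 2 * (i - 1))) 1 (l - d).

Lemma Subsp_ST m l d : Subsp m (ST m l d).
Proof.
  split; [|split; [|split]].
  - exists (fun _ => 0). intros. rewrite !sumR_zero by (intros; ring). ring.
  - intros f g [c Hc] [c' Hc']. exists (fun i => c i + c' i). intros h u HR.
    rewrite Hc, Hc' by auto. cbv beta.
    rewrite (sumR_lin3 c c'), (sumR_lin3 (fun i => c (i + d)%nat) (fun i => c' (i + d)%nat)). ring.
  - intros k f [c Hc]. exists (fun i => k * c i). intros h u HR. rewrite Hc by auto. cbv beta.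
    rewrite (sumR_scal3 k c), (sumR_scal3 k (fun i => c (i + d)%nat)). ring.
  - intros f g [c Hc] E. exists c. intros h u HR. rewrite <- E by auto. auto.
Qed.

Definition ind (j : nat) (v : R) : nat -> R := fun i => if Nat.eqb i j then v else 0.

Lemma ind_eq j v : ind j v j = v.
Proof. unfold ind. rewrite Nat.eqb_refl. auto. Qed.
Lemma ind_neq j v i : i <> j -> ind j v i = 0.
Proof. intros H. unfold ind. rewrite (proj2 (Nat.eqb_neq i j) H). auto. Qed.

Lemma ST_T2 m l d i : (1 <= i <= d)%nat ->
  ST m l d (fun h u => h ^ (i - 1) * u ^ (2 * l + 2 * d * (m - 1) + 1 - 2 * m * (i - 1))).
Proof.
  intros Hi. exists (ind i 1). intros h u HR.
  rewrite (sumR_single _ 1 d i) by (auto; intros; rewrite ind_neq by auto; ring).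
  rewrite sumR_zero by (intros; rewrite ind_neq by lia; ring).
  rewrite ind_neq by lia. rewrite ind_eq. ring.
Qed.

Lemma ST_T3 m l d i : (1 <= i <= l - d)%nat ->
  ST m l d (fun h u => h ^ (l - i) * u ^ (2 * m + 1 + 2 * (i - 1))).
Proof.
  intros Hi. exists (ind (i + d) 1). intros h u HR.
  rewrite (sumR_single _ 1 (l - d) i) by (auto; intros; rewrite ind_neq by lia; ring).
  rewrite sumR_zero by (intros; rewrite ind_neq by lia; ring).
  rewrite ind_neq by lia. rewrite ind_eq. ring.
Qed.

Lemma ST_M0 m l d : Nat.Odd m -> ST m l d (fun h u => u * h ^ l).
Proof.
  intros Hm. exists (ind 0 (1/2)). intros h u HR.
  rewrite !sumR_zero by (intros; rewrite ind_neq by lia; ring).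
  rewrite ind_eq, J00 by auto. field.
Qed.

Definition Mt m l a e : R -> R -> R := fun h u => u ^ (2 * a + 1) * u ^ (2 * m * e) * h ^ (l - a - e).

Lemma Mt_rec m l a e h u : Rel m h u -> (a + e + 1 <= l)%nat ->
  Mt m l (S a) e h u = Mt m l a e h u - Mt m l a (S e) h u.
Proof.
  intros (_ & _ & Hr) He. unfold Mt.
  replace (2 * S a + 1)%nat with (2 * a + 1 + 2)%nat by lia. rewrite pow_add.
  rewrite Nat.mul_succ_r, (pow_add u (2 * m * e) (2 * m)).
  replace (l - a - e)%nat with (S (l - S a - e)) by lia.
  replace (l - a - S e)%nat with (l - S a - e)%nat by lia. simpl (h ^ S _).
  replace (u ^ (2 * m)) with (h - u ^ 2) by lra. ring.
Qed.

Lemma ST_MA m l d : Nat.Odd m -> (d <= l)%nat -> forall a, (a <= l - d)%nat -> ST m l d (Mt m l a 0).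
Proof.
  intros Hm Hd. pose proof (Subsp_ST m l d) as HS. pose proof HS as (H0 & Ha & Hs & He).
  induction a; intros Ha'.
  - apply (He _ _ (ST_M0 m l d Hm)). intros h u _. unfold Mt. rewrite !Nat.mul_0_r, !Nat.sub_0_r. simpl. ring.
  - apply (He (fun h u => Mt m l a 0 h u - Mt m l a 1 h u)).
    + apply (Subsp_sub m); auto. apply IHa; lia.
      apply (He _ _ (ST_T3 m l d (S a) ltac:(lia))). intros h u _. unfold Mt.
      replace (l - S a)%nat with (l - a - 1)%nat by lia.
      replace (2 * m + 1 + 2 * (S a - 1))%nat with (2 * a + 1 + 2 * m * 1)%nat by lia.
      rewrite pow_add. ring.
    + intros h u HR. rewrite Mt_rec by (auto; lia). reflexivity.
Qed.

Lemma exp_T2 l d m e : (1 <= m)%nat -> (e < d)%nat -> (d <= l)%nat ->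
  (2 * l + 2 * d * (m - 1) + 1 - 2 * m * (d - e - 1) = 2 * (l - d + 0) + 1 + 2 * m * S e)%nat.
Proof.
  intros Hm He Hd.
  destruct m as [|m']; [lia|]. replace (S m' - 1)%nat with m' by lia.
  remember (d - e - 1)%nat as i. assert (d = i + e + 1)%nat by lia. subst d.
  remember (l - (i + e + 1))%nat as n. assert (l = n + (i + e + 1))%nat by lia. subst l.
  replace (n + (i + e + 1) - (i + e + 1) + 0)%nat with n by lia. nia.
Qed.

Lemma ST_MB m l d : Nat.Odd m -> (d <= l)%nat ->
  forall b e, (l - d + b + e <= l)%nat -> ST m l d (Mt m l (l - d + b) e).
Proof.
  intros Hm Hd. pose proof (Subsp_ST m l d) as HS. pose proof HS as (H0 & Ha & Hs & He).
  assert (Hm1 : (1 <= m)%nat) by (destruct Hm; lia).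
  induction b; intros e He'.
  - destruct e as [|e].
    + rewrite Nat.add_0_r. apply ST_MA; auto.
    + apply (He _ _ (ST_T2 m l d (d - e) ltac:(lia))). intros h u _. unfold Mt.
      replace (d - e - 1)%nat with (l - (l - d + 0) - S e)%nat at 1 by lia.
      rewrite exp_T2 by lia. rewrite pow_add. ring.
  - rewrite Nat.add_succ_r.
    apply (He (fun h u => Mt m l (l - d + b) e h u - Mt m l (l - d + b) (S e) h u)).
    + apply (Subsp_sub m); auto; apply IHb; lia.
    + intros h u HR. rewrite Mt_rec by (auto; lia). reflexivity.
Qed.

Lemma ST_mon m l d a : Nat.Odd m -> (d <= l)%nat -> (a <= l)%nat ->
  ST m l d (fun h u => u ^ (2 * a + 1) * h ^ (l - a)).
Proof.
  intros Hm Hd Ha. pose proof (Subsp_ST m l d) as (H0 & Hadd & Hs & He).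
  destruct (Nat.le_gt_cases a (l - d)).
  - apply (He _ _ (ST_MA m l d Hm Hd a H)). intros h u _. unfold Mt.
    rewrite !Nat.mul_0_r, !Nat.sub_0_r. simpl. ring.
  - pose proof (ST_MB m l d Hm Hd (a - (l - d)) 0 ltac:(lia)) as HB.
    replace (l - d + (a - (l - d)))%nat with a in HB by lia.
    apply (He _ _ HB). intros h u _. unfold Mt.
    rewrite !Nat.mul_0_r, !Nat.sub_0_r. simpl. ring.
Qed.

Definition Vt m l (f : R -> R -> R) := exists c : nat -> R, forall h u, Rel m h u ->
  f h u = sumR (fun a => c a * (u ^ (2 * a + 1) * h ^ (l - a))) 0 l.

Lemma Subsp_Vt m l : Subsp m (Vt m l).
Proof.
  split; [|split; [|split]].
  - exists (fun _ => 0). intros. rewrite !sumR_zero by (intros; ring). ring.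
  - intros f g [c Hc] [c' Hc']. exists (fun i => c i + c' i). intros h u HR.
    rewrite Hc, Hc' by auto. cbv beta. rewrite (sumR_lin2 c c'). ring.
  - intros k f [c Hc]. exists (fun i => k * c i). intros h u HR. rewrite Hc by auto. cbv beta.
    rewrite (sumR_scal2 k c). ring.
  - intros f g [c Hc] E. exists c. intros h u HR. rewrite <- E by auto. auto.
Qed.

Lemma Vt_ST m l d f : Nat.Odd m -> (d <= l)%nat -> Vt m l f -> ST m l d f.
Proof.
  intros Hm Hd [c Hc]. pose proof (Subsp_ST m l d) as HS.
  pose proof (Subsp_sum m _ (fun a h u => u ^ (2 * a + 1) * h ^ (l - a)) c l HS) as HH.
  destruct HS as (H0 & Hadd & Hs & He).
  apply (He _ _ (HH ltac:(intros; apply ST_mon; auto))).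
  intros h u HR. rewrite Hc by auto. reflexivity.
Qed.

Lemma Vt_h m l f : Vt m l f -> Vt m (S l) (fun h u => h * f h u).
Proof.
  intros [c Hc]. exists (fun a => if Nat.eqb a (S l) then 0 else c a). intros h u HR.
  rewrite Hc, sumR_last by auto. rewrite Nat.eqb_refl. rewrite <- sumR_scal.
  rewrite Rmult_0_l, Rplus_0_r. apply sumR_ext. intros a Ha.
  rewrite (proj2 (Nat.eqb_neq a (S l))) by lia.
  replace (S l - a)%nat with (S (l - a)) by lia. simpl. ring.
Qed.

Lemma Vt_mon m l K : Vt m l (fun h u => K * u ^ (2 * l + 1)).
Proof.
  exists (ind l K). intros h u HR.
  rewrite (sumR_single _ 0 l l) by (try lia; intros; rewrite ind_neq by auto; ring).
  rewrite ind_eq, Nat.sub_diag. simpl. ring.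
Qed.

Definition Wt m n d : R -> R -> R := fun h u =>
  sqrt h ^ (2 * (n + d) + 1) * RInt (F (2 * n) (2 * d + 1)) (PI + angB m u) (angB m u).

Lemma Wt_in m : Nat.Odd m -> forall d n, Vt m (n + d) (Wt m n d).
Proof.
  intros Hm. pose proof (Subsp_Vt m) as HS.
  induction d; intros n.
  - rewrite Nat.add_0_r. destruct (HS n) as (H0 & Hadd & Hs & He).
    apply (He _ _ (Vt_mon m n (-2 / INR (S (2 * n))))). intros h u HR.
    pose proof (geom m h u Hm HR) as [G1 _]. unfold Wt.
    change (2 * 0 + 1)%nat with 1%nat. rewrite LA, cosPIx, Nat.add_0_r.
    replace (- cos (angB m u)) with (-1 * cos (angB m u)) by ring.
    rewrite Rpow_mult_distr, pow_1_odd.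
    replace (2 * n + 1)%nat with (S (2 * n)) by lia. set (b := angB m u) in *. rewrite <- G1, Rpow_mult_distr.
    field. apply not_0_INR; lia.
  - rewrite Nat.add_succ_r. destruct (HS (S (n + d))) as (H0 & Hadd & Hs & He).
    apply (He (fun h u => h * Wt m n d h u - Wt m (S n) d h u)).
    + apply (Subsp_sub m); auto. apply Vt_h, IHd. apply (IHd (S n)).
    + intros h u (Hh & Hu & Hr). unfold Wt.
      pose proof (split_R (2 * n) (2 * d + 1) (PI + angB m u) (angB m u)) as E.
      replace (S (S (2 * n))) with (2 * S n)%nat in E by lia.
      replace (S (S (2 * d + 1))) with (2 * S d + 1)%nat in E by lia.
      replace (2 * (n + S d) + 1)%nat with (2 * (n + d) + 1 + 2)%nat by lia.
      replace (2 * (S n + d) + 1)%nat with (2 * (n + d) + 1 + 2)%nat by lia.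
      rewrite (pow_add (sqrt h) (2 * (n + d) + 1) 2), pow2_sqrt by lra. rewrite E. ring.
Qed.

Lemma tau_ex m l d : Nat.Odd m -> (d <= l)%nat ->
  ST m l d (fun h u => Jij m h u (2 * l - 2 * d) (2 * d)).
Proof.
  intros Hm Hd. apply Vt_ST; auto.
  pose proof (Wt_in m Hm d (l - d)) as HV. replace (l - d + d)%nat with l in HV by lia.
  destruct (Subsp_Vt m l) as (H0 & Hadd & Hs & He).
  apply (He _ _ (Hs (-1) _ HV)). intros h u (Hh & Hu & Hr). unfold Wt.
  rewrite Jform_o by auto.
  replace (2 * l - 2 * d)%nat with (2 * (l - d))%nat by lia.
  replace (2 * (l - d) + 2 * d + 1)%nat with (2 * (l - d + d) + 1)%nat by lia. ring.
Qed.


Lemma J11 m h u : Nat.Odd m -> Rel m h u -> Jij m h u 1 1 = - 2 / 3 * u ^ (3 * m).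
Proof.
  intros Hm HR. pose proof (geom m h u Hm HR) as [_ G2].
  destruct HR as (H1 & H2 & H3).
  rewrite Jform_o by auto. change (1 + 1 + 1)%nat with 3%nat. change (1 + 1)%nat with 2%nat.
  rewrite (LB 2), sinPIx. rewrite Nat.mul_comm, pow_mult.
  set (b := angB m u) in *. rewrite <- G2. simpl. field.
Qed.

Definition SM m l d (f : R -> R -> R) := exists c : nat -> R, forall h u, Rel m h u -> f h u =
  c 0%nat * h ^ (l - 1) * Jij m h u 1 1
  + sumR (fun i => c i * h ^ (i - 1) * u ^ (2 * l + 2 * d * (m - 1) + m - 2 * m * (i - 1))) 1 d
  + sumR (fun i => c (i + d)%nat * h ^ (l - i) * u ^ (3 * m + 2 + 2 * (i - 2))) 2 (l - d).

Lemma Subsp_SM m l d : Subsp m (SM m l d).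
Proof.
  split; [|split; [|split]].
  - exists (fun _ => 0). intros. rewrite !sumR_zero by (intros; ring). ring.
  - intros f g [c Hc] [c' Hc']. exists (fun i => c i + c' i). intros h u HR.
    rewrite Hc, Hc' by auto. cbv beta.
    rewrite (sumR_lin3 c c'), (sumR_lin3 (fun i => c (i + d)%nat) (fun i => c' (i + d)%nat)). ring.
  - intros k f [c Hc]. exists (fun i => k * c i). intros h u HR. rewrite Hc by auto. cbv beta.
    rewrite (sumR_scal3 k c), (sumR_scal3 k (fun i => c (i + d)%nat)). ring.
  - intros f g [c Hc] E. exists c. intros h u HR. rewrite <- E by auto. auto.
Qed.

Lemma SM_T2 m l d i : (1 <= i <= d)%nat ->
  SM m l d (fun h u => h ^ (i - 1) * u ^ (2 * l + 2 * d * (m - 1) + m - 2 * m * (i - 1))).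
Proof.
  intros Hi. exists (ind i 1). intros h u HR.
  rewrite (sumR_single _ 1 d i) by (auto; intros; rewrite ind_neq by auto; ring).
  rewrite sumR_zero by (intros; rewrite ind_neq by lia; ring).
  rewrite ind_neq by lia. rewrite ind_eq. ring.
Qed.

Lemma SM_T3 m l d i : (2 <= i <= l - d)%nat ->
  SM m l d (fun h u => h ^ (l - i) * u ^ (3 * m + 2 + 2 * (i - 2))).
Proof.
  intros Hi. exists (ind (i + d) 1). intros h u HR.
  rewrite (sumR_single _ 2 (l - d) i) by (auto; intros; rewrite ind_neq by lia; ring).
  rewrite sumR_zero by (intros; rewrite ind_neq by lia; ring).
  rewrite ind_neq by lia. rewrite ind_eq. ring.
Qed.

Lemma SM_M0 m l d : Nat.Odd m -> SM m l d (fun h u => u ^ (3 * m) * h ^ (l - 1)).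
Proof.
  intros Hm. exists (ind 0 (-3/2)). intros h u HR.
  rewrite !sumR_zero by (intros; rewrite ind_neq by lia; ring).
  rewrite ind_eq, J11 by auto. field.
Qed.

Definition Mm m l a e : R -> R -> R := fun h u =>
  u ^ (3 * m) * u ^ (2 * a) * u ^ (2 * m * e) * h ^ (l - 1 - a - e).

Lemma Mm_rec m l a e h u : Rel m h u -> (a + e + 1 <= l - 1)%nat ->
  Mm m l a (S e) h u = Mm m l a e h u - Mm m l (S a) e h u.
Proof.
  intros (_ & _ & Hr) He. unfold Mm.
  rewrite (Nat.mul_succ_r (2 * m) e), (pow_add u (2 * m * e) (2 * m)).
  rewrite (Nat.mul_succ_r 2 a), (pow_add u (2 * a) 2).
  replace (l - 1 - a - e)%nat with (S (l - 1 - S a - e)) by lia.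
  replace (l - 1 - a - S e)%nat with (l - 1 - S a - e)%nat by lia. simpl (h ^ S _).
  replace (u ^ (2 * m)) with (h - u ^ 2) by lra. ring.
Qed.

Lemma exp_M2 l d m i : (1 <= m)%nat -> (1 <= i <= d)%nat -> (d <= l)%nat ->
  (2 * l + 2 * d * (m - 1) + m - 2 * m * (i - 1) = 3 * m + 2 * (l - d) + 2 * m * (d - i))%nat.
Proof.
  intros Hm Hi Hd.
  destruct m as [|m']; [lia|]. replace (S m' - 1)%nat with m' by lia.
  destruct i as [|i']; [lia|]. replace (S i' - 1)%nat with i' by lia.
  remember (d - S i')%nat as e. assert (d = S i' + e)%nat by lia. subst d.
  remember (l - (S i' + e))%nat as n. assert (l = n + (S i' + e))%nat by lia. subst l.
  replace (n + (S i' + e) - (S i' + e))%nat with n by lia.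
  replace (S i' + e - S i')%nat with e by lia. nia.
Qed.

Lemma SM_edge m l d e : Nat.Odd m -> (1 <= l)%nat -> (d <= l - 1)%nat -> (e < d)%nat ->
  SM m l d (Mm m l (l - d) e).
Proof.
  intros Hm Hl Hd He. destruct (Subsp_SM m l d) as (H0 & Hadd & Hs & Hx).
  assert (Hm1 : (1 <= m)%nat) by (destruct Hm; lia).
  apply (Hx _ _ (SM_T2 m l d (d - e) ltac:(lia))). intros h u _. unfold Mm.
  rewrite exp_M2 by lia.
  replace (l - 1 - (l - d) - e)%nat with (d - e - 1)%nat by lia.
  replace (d - (d - e))%nat with e by lia. rewrite !pow_add. ring.
Qed.

Lemma SM_region m l d : Nat.Odd m -> (1 <= l)%nat -> (d <= l - 1)%nat ->
  forall e a, (a <= l - d)%nat -> (a + e <= l - 1)%nat -> SM m l d (Mm m l a e).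
Proof.
  intros Hm Hl Hd. pose proof (Subsp_SM m l d) as HS. pose proof HS as (H0 & Hadd & Hs & Hx).
  induction e; intros a Ha Hae.
  - destruct (Nat.eq_dec a (l - d)) as [->|Hne].
    + apply SM_edge; auto; lia.
    + destruct a as [|a].
      * apply (Hx _ _ (SM_M0 m l d Hm)). intros h u _. unfold Mm.
        rewrite !Nat.mul_0_r, !Nat.sub_0_r. simpl. ring.
      * apply (Hx _ _ (SM_T3 m l d (S (S a)) ltac:(lia))). intros h u _. unfold Mm.
        replace (l - S (S a))%nat with (l - 1 - S a - 0)%nat by lia.
        replace (3 * m + 2 + 2 * (S (S a) - 2))%nat with (3 * m + 2 * S a)%nat by lia.
        rewrite !Nat.mul_0_r, pow_add. simpl (u ^ 0). ring.
  - destruct (Nat.eq_dec a (l - d)) as [->|Hne].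
    + apply SM_edge; auto; lia.
    + apply (Hx (fun h u => Mm m l a e h u - Mm m l (S a) e h u)).
      * apply (Subsp_sub m); auto; apply IHe; lia.
      * intros h u HR. rewrite Mm_rec by (auto; lia). reflexivity.
Qed.

Definition Vm m K (f : R -> R -> R) := exists c : nat -> R, forall h u, Rel m h u ->
  f h u = sumR (fun a => c a * (u ^ (m * (2 * a + 3)) * h ^ (K - a))) 0 K.

Lemma Subsp_Vm m K : Subsp m (Vm m K).
Proof.
  split; [|split; [|split]].
  - exists (fun _ => 0). intros. rewrite !sumR_zero by (intros; ring). ring.
  - intros f g [c Hc] [c' Hc']. exists (fun i => c i + c' i). intros h u HR.
    rewrite Hc, Hc' by auto. cbv beta. rewrite (sumR_lin2 c c'). ring.
  - intros k f [c Hc]. exists (fun i => k * c i). intros h u HR. rewrite Hc by auto. cbv beta.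
    rewrite (sumR_scal2 k c). ring.
  - intros f g [c Hc] E. exists c. intros h u HR. rewrite <- E by auto. auto.
Qed.

Lemma Vm_SM m l d f : Nat.Odd m -> (1 <= l)%nat -> (d <= l - 1)%nat -> Vm m (l - 1) f -> SM m l d f.
Proof.
  intros Hm Hl Hd [c Hc]. pose proof (Subsp_SM m l d) as HS.
  pose proof (Subsp_sum m _ (fun a h u => u ^ (m * (2 * a + 3)) * h ^ (l - 1 - a)) c (l - 1) HS) as HH.
  destruct HS as (H0 & Hadd & Hs & He).
  apply (He _ _ (HH ltac:(intros a Ha; apply (He _ _ (SM_region m l d Hm Hl Hd a 0 ltac:(lia) ltac:(lia)));
     intros h u _; unfold Mm; rewrite !Nat.mul_0_r, !Nat.sub_0_r;
     replace (m * (2 * a + 3))%nat with (3 * m + 2 * m * a)%nat by ring;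
     rewrite pow_add; simpl (u ^ 0); ring))).
  intros h u HR. rewrite Hc by auto. reflexivity.
Qed.

Lemma Vm_h m K f : Vm m K f -> Vm m (S K) (fun h u => h * f h u).
Proof.
  intros [c Hc]. exists (fun a => if Nat.eqb a (S K) then 0 else c a). intros h u HR.
  rewrite Hc, sumR_last by auto. rewrite Nat.eqb_refl. rewrite <- sumR_scal.
  rewrite Rmult_0_l, Rplus_0_r. apply sumR_ext. intros a Ha.
  rewrite (proj2 (Nat.eqb_neq a (S K))) by lia.
  replace (S K - a)%nat with (S (K - a)) by lia. simpl. ring.
Qed.

Lemma Vm_mon m K c0 : Vm m K (fun h u => c0 * u ^ (m * (2 * K + 3))).
Proof.
  exists (ind K c0). intros h u HR.
  rewrite (sumR_single _ 0 K K) by (try lia; intros; rewrite ind_neq by auto; ring).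
  rewrite ind_eq, Nat.sub_diag. simpl. ring.
Qed.

Definition Wm m n d : R -> R -> R := fun h u =>
  sqrt h ^ (2 * (n + d) + 3) * RInt (F (2 * n + 1) (2 * d + 2)) (PI + angB m u) (angB m u).

Lemma Wm_in m : Nat.Odd m -> forall n d, Vm m (n + d) (Wm m n d).
Proof.
  intros Hm.
  induction n; intros d.
  - destruct (Subsp_Vm m (0 + d)) as (H0 & Hadd & Hs & He).
    apply (He _ _ (Vm_mon m d (2 / INR (S (2 * d + 2))))). intros h u HR.
    pose proof (geom m h u Hm HR) as [_ G2]. unfold Wm.
    change (2 * 0 + 1)%nat with 1%nat. rewrite LB, sinPIx.
    replace (- sin (angB m u)) with (-1 * sin (angB m u)) by ring.
    rewrite Rpow_mult_distr.
    replace (S (2 * d + 2)) with (S (2 * (d + 1))) by lia. rewrite pow_1_odd.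
    replace (2 * (0 + d) + 3)%nat with (S (2 * (d + 1))) by lia.
    replace (2 * d + 3)%nat with (S (2 * (d + 1))) by lia.
    rewrite pow_mult. set (b := angB m u) in *. rewrite <- G2, Rpow_mult_distr.
    field. apply not_0_INR; lia.
  - destruct (Subsp_Vm m (S n + d)) as (H0 & Hadd & Hs & He).
    apply (He (fun h u => h * Wm m n d h u - Wm m n (S d) h u)).
    + apply (Subsp_sub m); auto. apply Subsp_Vm. apply Vm_h, IHn.
      pose proof (IHn (S d)) as HH. rewrite Nat.add_succ_r in HH. exact HH.
    + intros h u (Hh & Hu & Hr). unfold Wm.
      pose proof (split_R (2 * n + 1) (2 * d + 2) (PI + angB m u) (angB m u)) as E.
      replace (S (S (2 * n + 1))) with (2 * S n + 1)%nat in E by lia.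
      replace (S (S (2 * d + 2))) with (2 * S d + 2)%nat in E by lia.
      replace (2 * (n + S d) + 3)%nat with (2 * (n + d) + 3 + 2)%nat by lia.
      replace (2 * (S n + d) + 3)%nat with (2 * (n + d) + 3 + 2)%nat by lia.
      rewrite (pow_add (sqrt h) (2 * (n + d) + 3) 2), pow2_sqrt by lra. rewrite E. ring.
Qed.

Lemma mu_ex m l d : Nat.Odd m -> (1 <= l)%nat -> (d <= l - 1)%nat ->
  SM m l d (fun h u => Jij m h u (2 * l - 2 * d - 1) (2 * d + 1)).
Proof.
  intros Hm Hl Hd. apply Vm_SM; auto.
  pose proof (Wm_in m Hm (l - d - 1) d) as HV. replace (l - d - 1 + d)%nat with (l - 1)%nat in HV by lia.
  destruct (Subsp_Vm m (l - 1)) as (H0 & Hadd & Hs & He).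
  apply (He _ _ (Hs (-1) _ HV)). intros h u (Hh & Hu & Hr). unfold Wm.
  rewrite Jform_o by auto.
  replace (2 * l - 2 * d - 1)%nat with (2 * (l - d - 1) + 1)%nat by lia.
  replace (2 * (l - d - 1) + 1 + (2 * d + 1) + 1)%nat with (2 * (l - d - 1 + d) + 3)%nat by lia.
  replace (2 * d + 1 + 1)%nat with (2 * d + 2)%nat by lia. ring.
Qed.


Theorem lemma3p3 (k : nat) :
  let m := (2 * k + 1)%nat in
  (* (i) *)
  (forall (h u : R), 0 < h -> 0 < u -> u ^ 2 + u ^ (2 * m) = h ->
     forall i l s : nat,
       Jij m h u i (2 * s) = - Iij m h u i (2 * s) /\
       Jij m h u (2 * l) (2 * s + 1) = Iij m h u (2 * l) (2 * s + 1) /\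
       Jij m h u (2 * l + 1) (2 * s + 1) = - Iij m h u (2 * l + 1) (2 * s + 1))
  /\
  (* (ii) *)
  (forall l : nat, (1 <= l)%nat ->
     exists tau mu : nat -> nat -> R,   (* tau d i = tau^i_{l,d}, mu d i = mu^i_{l,d} *)
       forall (h u : R), 0 < h -> 0 < u -> u ^ 2 + u ^ (2 * m) = h ->
         (forall d : nat, (d <= l)%nat ->
            Jij m h u (2 * l - 2 * d) (2 * d) =
              tau d 0%nat * h ^ l * Jij m h u 0 0
              + sumR (fun i => tau d i * h ^ (i - 1)
                         * u ^ (2 * l + 2 * d * (m - 1) + 1 - 2 * m * (i - 1))) 1 d
              + sumR (fun i => tau d (i + d)%nat * h ^ (l - i)
                         * u ^ (2 * m + 1 + 2 * (i - 1))) 1 (l - d))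
         /\
         (forall d : nat, (d <= l - 1)%nat ->
            Jij m h u (2 * l - 2 * d - 1) (2 * d + 1) =
              mu d 0%nat * h ^ (l - 1) * Jij m h u 1 1
              + sumR (fun i => mu d i * h ^ (i - 1)
                         * u ^ (2 * l + 2 * d * (m - 1) + m - 2 * m * (i - 1))) 1 d
              + sumR (fun i => mu d (i + d)%nat * h ^ (l - i)
                         * u ^ (3 * m + 2 + 2 * (i - 2))) 2 (l - d)))
  /\
  (* (iii) *)
  (forall l : nat,
     exists chi : nat -> R,   (* chi d = chi_{l,d} *)
       forall (h u : R), 0 < h -> 0 < u -> u ^ 2 + u ^ (2 * m) = h ->
         forall d : nat, (d <= l)%nat ->
           Jij m h u (2 * l + 1 - 2 * d) (2 * d) = 0 /\
           Jij m h u (2 * l - 2 * d) (2 * d + 1) = chi d * h ^ l * Jij m h u 0 1).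
Proof.
  cbv zeta.
  assert (Hm : Nat.Odd (2 * k + 1)) by (exists k; reflexivity).
  split; [apply part_i|split; [|apply part_iii]].
  intros l Hl.
  assert (Ht : forall d, exists c : nat -> R, (d <= l)%nat -> forall h u, Rel (2 * k + 1) h u ->
     Jij (2 * k + 1) h u (2 * l - 2 * d) (2 * d) =
              c 0%nat * h ^ l * Jij (2 * k + 1) h u 0 0
              + sumR (fun i => c i * h ^ (i - 1)
                         * u ^ (2 * l + 2 * d * ((2 * k + 1) - 1) + 1 - 2 * (2 * k + 1) * (i - 1))) 1 d
              + sumR (fun i => c (i + d)%nat * h ^ (l - i)
                         * u ^ (2 * (2 * k + 1) + 1 + 2 * (i - 1))) 1 (l - d)).
  { intros d. destruct (Nat.le_gt_cases d l) as [Hd|Hd].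
    - destruct (tau_ex (2 * k + 1) l d Hm Hd) as [c Hc]. exists c. intros _. exact Hc.
    - exists (fun _ => 0). intros; lia. }
  assert (Hmu : forall d, exists c : nat -> R, (d <= l - 1)%nat -> forall h u, Rel (2 * k + 1) h u ->
     Jij (2 * k + 1) h u (2 * l - 2 * d - 1) (2 * d + 1) =
              c 0%nat * h ^ (l - 1) * Jij (2 * k + 1) h u 1 1
              + sumR (fun i => c i * h ^ (i - 1)
                         * u ^ (2 * l + 2 * d * ((2 * k + 1) - 1) + (2 * k + 1) - 2 * (2 * k + 1) * (i - 1))) 1 d
              + sumR (fun i => c (i + d)%nat * h ^ (l - i)
                         * u ^ (3 * (2 * k + 1) + 2 + 2 * (i - 2))) 2 (l - d)).
  { intros d. destruct (Nat.le_gt_cases d (l - 1)) as [Hd|Hd].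
    - destruct (mu_ex (2 * k + 1) l d Hm Hl Hd) as [c Hc]. exists c. intros _. exact Hc.
    - exists (fun _ => 0). intros; lia. }
  destruct (functional_choice _ Ht) as [tau Htau].
  destruct (functional_choice _ Hmu) as [mu Hmu'].
  exists tau, mu. intros h u Hh Hu Hr. split.
  - intros d Hd. apply Htau; auto. repeat split; auto.
  - intros d Hd. apply Hmu'; auto. repeat split; auto.
Qed.
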